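(* Fix a bounded subset $E\subset\mathbb C$. There exists $\ell=\ell(E)\ge1$ such that for all sufficiently small $\epsilon>0$, $$a_tkmn_z\in H_{\ell\epsilon}\,m\,a_t\,n_z\,U_{\ell\epsilon}$$ holds for any $m\in M$, $t>0$, $z\in E$ and $k\in K_\epsilon$.
   Context: $G=\mathrm{PSL}_2(\mathbb C)$, $K=\mathrm{PSU}(2)$, $a_t=\mathrm{diag}(e^{t/2},e^{-t/2})$, $M=\{\mathrm{diag}(e^{i\theta},e^{-i\theta})\}$, $n_z=\begin{pmatrix}1&z\\0&1\end{pmatrix}$, $H$ the stabilizer in $G$ of the unit circle centered at $0$. With a fixed left-invariant metric on $G$, $U_\epsilon$ is the $\epsilon$-ball around $e$, and for $W\subset G$, $W_\epsilon=W\cap U_\epsilon$ (so $K_\epsilon=K\cap U_\epsilon$, $H_{\ell\epsilon}=H\cap U_{\ell\epsilon}$). *)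

(* Defs.v *)
From HB Require Import structures.
From mathcomp Require Import all_boot all_order all_algebra.
From mathcomp Require Import all_classical all_reals.
From mathcomp Require Import all_analysis.
From mathcomp.real_closed Require Import complex.
Set Implicit Arguments. Unset Strict Implicit. Unset Printing Implicit Defensive.
Import Order.TTheory GRing.Theory Num.Theory.
Local Open Scope ring_scope.
Local Open Scope classical_set_scope.
Local Open Scope complex_scope.

(* Elements of G = PSL_2(C) are represented by matrices of SL_2(C);
   two matrices represent the same element iff they differ by a sign. *)
Section PSL2.
Variable R : realType.
Notation C := R[i].
Notation mx := 'M[C]_2.

Definition SL2 (A : mx) : Prop := \det A = 1.

Definition psl_eq (A B : mx) : Prop := A = B \/ A = - B.

Definition mxn (A : mx) : R := \sum_(i < 2) \sum_(j < 2) Normc.normc (A i j).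

(* distance of (the class of) A to the identity in the matrix chart *)
Definition chart_dist (A : mx) : R := Num.min (mxn (A - 1)) (mxn (A + 1)).

Definition a_ (t : R) : mx := \matrix_(i < 2, j < 2)
  (if i == j then (if i == 0 then (expR (t / 2))%:C else (expR (- (t / 2)))%:C)
   else 0).

Definition expi (th : R) : C := (cos th +i* sin th).

Definition m_ (th : R) : mx := \matrix_(i < 2, j < 2)
  (if i == j then (if i == 0 then expi th else expi (- th)) else 0).

Definition Mset : set mx := [set m | exists th : R, psl_eq m (m_ th)].

Definition n_ (z : C) : mx := \matrix_(i < 2, j < 2)
  (if i == j then 1 else if i == 0 then z else 0).

Definition Kset : set mx :=
  [set A | SL2 A /\ A *m (map_mx Num.conj A)^T = 1].

Definition mob (g : mx) (z : C) : C :=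
  (g 0 0 * z + g 0 1) / (g 1 0 * z + g 1 1).

Definition unit_circle : set C := [set z | Normc.normc z = 1].

(* H = stabilizer in G of the unit circle centered at 0: g maps the unit
   circle (avoiding the pole, i.e. no point goes to infinity) onto itself. *)
Definition Hset : set mx :=
  [set g | SL2 g /\
     (forall z, unit_circle z -> g 1 0 * z + g 1 1 != 0 /\ unit_circle (mob g z)) /\
     (forall w, unit_circle w -> exists2 z, unit_circle z & mob g z = w)].

(* A left-invariant metric on G = PSL_2(C), given as a function on
   representatives, which is locally bi-Lipschitz equivalent near the
   identity to the matrix chart (as every left-invariant Riemannian metric is). *)
Definition left_inv_metric (d : mx -> mx -> R) : Prop :=
  (* well defined on PSL_2 *)
  (forall A B, SL2 A -> SL2 B -> d (- A) B = d A B /\ d A (- B) = d A B) /\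
  (forall A, SL2 A -> d A A = 0) /\
  (forall A B, SL2 A -> SL2 B -> d A B = 0 -> psl_eq A B) /\
  (forall A B, SL2 A -> SL2 B -> d A B = d B A) /\
  (forall X Y Z, SL2 X -> SL2 Y -> SL2 Z -> d X Z <= d X Y + d Y Z) /\
  (forall g A B, SL2 g -> SL2 A -> SL2 B -> d (g *m A) (g *m B) = d A B) /\
  (exists c r : R, 0 < c /\ 0 < r /\
     (forall A, SL2 A -> (d 1 A < r \/ chart_dist A < r) ->
        (c * chart_dist A <= d 1 A /\ c * d 1 A <= chart_dist A))).

Definition U_ (d : mx -> mx -> R) (eps : R) : set mx :=
  [set A | SL2 A /\ d 1 A < eps].

Definition sub_ (d : mx -> mx -> R) (W : set mx) (eps : R) : set mx :=
  W `&` U_ d eps.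

Definition bounded_set (E : set C) : Prop :=
  exists B : R, forall z, E z -> Normc.normc z <= B.

End PSL2.

(* Main.v *)
Require Import Defs.
From HB Require Import structures.
From mathcomp Require Import all_boot all_order all_algebra.
From mathcomp Require Import all_classical all_reals.
From mathcomp Require trigo.
From mathcomp.real_closed Require Import complex.
From mathcomp Require Import ring lra.
Import Order.TTheory GRing.Theory Num.Theory.
Local Open Scope ring_scope.
Local Open Scope classical_set_scope.


Section H.
Variable R : realType.
Notation C := R[i].
Notation mx := 'M[C]_2.

Lemma sum2 (F : 'I_2 -> R) : \sum_(i < 2) F i = F 0 + F 1.
Proof. rewrite !big_ord_recr big_ord0 /= add0r. by congr (F _ + F _); apply: val_inj. Qed.

Lemma sum2C (F : 'I_2 -> C) : \sum_(i < 2) F i = F 0 + F 1.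
Proof. rewrite !big_ord_recr big_ord0 /= add0r. by congr (F _ + F _); apply: val_inj. Qed.

Lemma mulmx2 (A B : mx) i j : (A *m B) i j = A i 0 * B 0 j + A i 1 * B 1 j.
Proof. by rewrite mxE sum2C. Qed.

Lemma normc_ge0 (x : C) : 0 <= Normc.normc x.
Proof. by case: x => a b /=; apply: sqrtr_ge0. Qed.

Lemma mxnE (A : mx) : mxn A = Normc.normc (A 0 0) + Normc.normc (A 0 1)
  + Normc.normc (A 1 0) + Normc.normc (A 1 1).
Proof. by rewrite /mxn !sum2 addrA. Qed.

Lemma mxn_mul (A B : mx) : mxn (A *m B) <= mxn A * mxn B.
Proof.
rewrite !mxnE !mulmx2.
have h := fun x y => le_normcD x y.
have hm := Normc.normcM.
have Hs : forall (a b c d : C), Normc.normc (a * b + c * d) <=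
  Normc.normc a * Normc.normc b + Normc.normc c * Normc.normc d.
  by move=> a b c d; rewrite -!hm; apply: le_normcD.
apply: le_trans; first by apply: lerD; [apply: lerD; [apply: lerD|]|]; apply: Hs.
have := normc_ge0 (A 0 0); have := normc_ge0 (A 0 1);
have := normc_ge0 (A 1 0); have := normc_ge0 (A 1 1);
have := normc_ge0 (B 0 0); have := normc_ge0 (B 0 1);
have := normc_ge0 (B 1 0); have := normc_ge0 (B 1 1).
nra.
Qed.

Lemma normc_expi (th : R) : Normc.normc (expi th) = 1.
Proof. by rewrite /expi /= trigo.cos2Dsin2 sqrtr1. Qed.

Lemma mxn_m (th : R) : mxn (m_ th) = 2.
Proof. rewrite mxnE !mxE /= !trigo.cos2Dsin2 sqrtr1 expr0n /= addr0 sqrtr0; lra. Qed.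

Lemma mxn_n (z : C) : mxn (n_ z) = 2 + Normc.normc z.
Proof. rewrite mxnE !mxE /= expr0n /= !addr0 expr1n sqrtr1 sqrtr0; lra. Qed.

Lemma expiNK (th : R) : expi (- th) * expi th = 1.
Proof.
rewrite /expi trigo.cosN trigo.sinN /=. apply/eqP; rewrite eq_complex /=.
by rewrite !mulNr opprK -!expr2 trigo.cos2Dsin2 [trigo.cos th * _]mulrC subrr !eqxx.
Qed.

Lemma ord2 (i : 'I_2) : i = 0 \/ i = 1.
Proof. case: i => [[|[|n]]] Hi; [left|right|by []]; exact: val_inj. Qed.

Lemma mm_inv (th : R) : m_ (- th) *m m_ th = 1.
Proof.
apply/matrixP => i j; rewrite mulmx2 !mxE.
case: (ord2 i) => ->; case: (ord2 j) => -> /=; rewrite ?mulr0 ?mul0r ?addr0 ?add0r //.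
  by rewrite expiNK.
by rewrite opprK mulrC expiNK.
Qed.

Lemma mm_inv' (th : R) : m_ th *m m_ (- th) = 1.
Proof. by have := mm_inv (- th); rewrite opprK. Qed.

Lemma nn_inv (z : C) : n_ (- z) *m n_ z = 1.
Proof.
apply/matrixP => i j; rewrite mulmx2 !mxE.
case: (ord2 i) => ->; case: (ord2 j) => -> /=; rewrite ?mulr0 ?mul0r ?addr0 ?add0r ?mulr1 ?mul1r //.
exact: subrr.
Qed.

Lemma nn_inv' (z : C) : n_ z *m n_ (- z) = 1.
Proof. by have := nn_inv (- z); rewrite opprK. Qed.

Lemma ma_comm (th t : R) : m_ th *m a_ t = a_ t *m m_ th.
Proof.
apply/matrixP => i j; rewrite !mulmx2 !mxE.
case: (ord2 i) => ->; case: (ord2 j) => -> /=; rewrite ?mulr0 ?mul0r ?addr0 ?add0r //;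
by rewrite mulrC.
Qed.

End H.

Arguments mxn_mul {R}.
Arguments normc_ge0 {R}.
Arguments mxnE {R}.
Lemma mxn_ge0 (R : realType) (A : 'M[R[i]]_2) : 0 <= mxn A.
Proof. rewrite mxnE; do !apply: addr_ge0; exact: normc_ge0. Qed.
Arguments mxn_ge0 {R}.

Lemma min_bound (R : realType) (C a b a' b' : R) :
  a' <= C * a -> b' <= C * b -> Num.min a' b' <= C * Num.min a b.
Proof.
move=> h1 h2; rewrite /Order.min.
case: ifP => H1; case: ifP => H2; 
  rewrite ?(negbT H1) ?(negbT H2);
  repeat match goal with H : (_ < _) = false |- _ => move/negbT: H; rewrite -leNgt => H end;
  nra.
Qed.

Theorem proposition4p4 (R : realType) (d : 'M[R[i]]_2 -> 'M[R[i]]_2 -> R)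
  (hd : left_inv_metric d) (E : set R[i]) (hE : bounded_set E) :
  exists2 l : R, 1 <= l &
  exists2 eps0 : R, 0 < eps0 &
  forall eps : R, 0 < eps -> eps < eps0 ->
  forall (m : 'M[R[i]]_2) (t : R) (z : R[i]) (k : 'M[R[i]]_2),
    Mset m -> 0 < t -> E z -> sub_ d (@Kset R) eps k ->
    exists h u : 'M[R[i]]_2,
      [/\ sub_ d (@Hset R) (l * eps) h, U_ d (l * eps) u &
          psl_eq (a_ t *m k *m m *m n_ z) (h *m m *m a_ t *m n_ z *m u)].
Proof.
move: hd => [_ [hdAA [_ [_ [_ [_ [c [r [c0 [r0 hc]]]]]]]]]].
case: hE => B hB.
pose C0 : R := (2 * (2 + `|B|)) ^+ 2.
have C0pos : 0 < C0 by rewrite /C0 exprn_gt0 // mulr_gt0 // ltr_wpDr.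
pose D : R := C0 / c ^+ 2.
have Dpos : 0 < D by rewrite /D divr_gt0 // exprn_gt0.
have C0D : C0 = D * c ^+ 2 by rewrite /D mulfVK // expf_neq0 // gt_eqF.
exists (1 + D); first by rewrite lerDl ltW.
exists (Num.min r (r * c / C0)); first by rewrite lt_min r0 divr_gt0 // mulr_gt0.
move=> eps e0; rewrite lt_min => /andP[er erc].
move=> m t z k [th hm] t0 Ez [[SLk _] [_ dk]].
pose Q := n_ (- z) *m m_ (- th); pose P := m_ th *m n_ z.
have QP : Q *m P = 1.
  by rewrite /Q /P mulmxA -(mulmxA _ (m_ (-th))) mm_inv mulmx1 nn_inv.
have SL1 : SL2 (1 : 'M[R[i]]_2) by rewrite /SL2 det1.
have lpos : 0 < (1 + D) * eps by rewrite mulr_gt0 // addr_gt0.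
exists 1, (Q *m k *m P); split.
- split; last by split => //; rewrite hdAA.
  split => //; split.
    move=> w uw; rewrite /mob !mxE /=.
    have e1 : (0:R[i]) * w + 1 = 1 by ring.
    have e2 : (1:R[i]) * w + 0 = w by ring.
    by rewrite e1 e2 divr1 oner_neq0.
  move=> w uw; exists w => //; rewrite /mob !mxE /=.
  have e1 : (0:R[i]) * w + 1 = 1 by ring.
  have e2 : (1:R[i]) * w + 0 = w by ring.
  by rewrite e1 e2 divr1.
- have SLu : SL2 (Q *m k *m P).
    have e : \det (Q *m k *m P) = \det k * \det (Q *m P).
      by rewrite !det_mulmx; ring.
    move: SLk; rewrite /SL2 => hk; rewrite e hk QP det1 mulr1 //.
  split => //.
  have nz : Normc.normc z <= `|B| by apply: le_trans (hB _ Ez) (ler_norm _).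
  have hQ : mxn Q <= 2 * (2 + `|B|).
    rewrite /Q; apply: (le_trans (mxn_mul _ _)); rewrite mxn_n mxn_m normcN mulrC.
    by rewrite ler_pM2l // lerD2l.
  have hP : mxn P <= 2 * (2 + `|B|).
    by rewrite /P; apply: (le_trans (mxn_mul _ _)); rewrite mxn_n mxn_m ler_pM2l // lerD2l.
  have hconj : forall X, mxn (Q *m X *m P) <= C0 * mxn X.
    move=> X; apply: (le_trans (mxn_mul _ _)).
    apply: (le_trans (ler_wpM2r (mxn_ge0 _) (mxn_mul _ _))).
    have hab : mxn Q * mxn P <= C0.
      rewrite /C0 expr2; apply: ler_pM => //; exact: mxn_ge0.
    by rewrite mulrAC ler_wpM2r // mxn_ge0.
  have em : Q *m k *m P - 1 = Q *m (k - 1) *m P.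
    by rewrite mulmxBr mulmxBl mulmx1 QP.
  have ep : Q *m k *m P + 1 = Q *m (k + 1) *m P.
    by rewrite mulmxDr mulmxDl mulmx1 QP.
  have hcu : chart_dist (Q *m k *m P) <= C0 * chart_dist k.
    rewrite /chart_dist em ep; apply: min_bound; exact: hconj.
  have [hck _] := hc k SLk (or_introl (lt_trans dk er)).
  have ercC : eps * C0 < r * c by rewrite -ltr_pdivlMr.
  have cur : chart_dist (Q *m k *m P) < r.
    have : c * chart_dist (Q *m k *m P) < c * r.
      have := ler_wpM2l (ltW c0) hcu.
      have := ler_wpM2l (ltW C0pos) hck.
      nra.
    by rewrite ltr_pM2l.
  have [_ hdu] := hc _ SLu (or_intror cur).
  have : c ^+ 2 * d 1 (Q *m k *m P) < c ^+ 2 * ((1 + D) * eps).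
    have := ler_wpM2l (ltW c0) hcu.
    have := ler_wpM2l (ltW C0pos) hck.
    have := ler_wpM2l (ltW c0) hdu.
    move: C0D; rewrite expr2 => C0D.
    rewrite C0D; nra.
  by rewrite ltr_pM2l // exprn_gt0.
- left.
  have key : m_ th *m a_ t *m n_ z *m n_ (- z) *m m_ (- th) = a_ t.
    by rewrite -(mulmxA _ (n_ z)) nn_inv' mulmx1 ma_comm -mulmxA mm_inv' mulmx1.
  case: hm => ->.
    by rewrite mul1mx !mulmxA key.
  by rewrite mul1mx !mulNmx !mulmxN !mulNmx !mulmxA key.
Qed.
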